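(* Let $n\ge 5$, $q$ odd, and let $G$ be an almost simple primitive permutation group with socle $G_0=\mathrm{P\Omega}^{\epsilon}_n(q)$ (with $\epsilon$ absent if $n$ is odd) acting on a $G$-orbit $X$ of non-degenerate $1$-dimensional subspaces of the natural module $V_n(q)$. Then $\mathrm{diam}(X,G)=2$.
   Context: $V_n(q)$ carries a non-degenerate quadratic form $Q$ with associated bilinear form $f$; a $1$-space $\langle v\rangle$ is non-degenerate iff $Q(v)\neq 0$. An (undirected) orbital graph of $(X,G)$ is a graph on $X$ whose edge set is a single $G$-orbit on unordered $2$-subsets of $X$, and $\mathrm{diam}(X,G)$ is the maximum diameter of all such orbital graphs. *)

(* Defs.v *)
From HB Require Import structures.
From mathcomp Require Import all_boot all_order all_algebra all_fingroup all_solvable.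
Set Implicit Arguments. Unset Strict Implicit. Unset Printing Implicit Defensive.
Import GRing.Theory.
Local Open Scope ring_scope.

Section Orth.
Variables (F : finFieldType) (n : nat).

Definition qform (A : 'M[F]_n) (v : 'rV[F]_n) : F := (v *m A *m v^T) 0 0.

Definition line (v : 'rV[F]_n) : {set 'rV[F]_n} := [set c *: v | c : F].

Definition is_point (S : {set 'rV[F]_n}) : bool :=
  [exists v : 'rV[F]_n, (v != 0) && (S == line v)].

Definition point := {S : {set 'rV[F]_n} | is_point S}.

Definition nondeg_point (A : 'M[F]_n) (x : point) : bool :=
  [exists v : 'rV[F]_n, [&& v != 0, val x == line v & qform A v != 0]].

Definition semilin_image (s : F -> F) (M : 'M[F]_n) (S : {set 'rV[F]_n}) :=
  [set map_mx s v *m M | v in S].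

Definition induced_by_semisim (A : 'M[F]_n) (p : {perm point}) : Prop :=
  exists (s : {rmorphism F -> F}) (M : 'M[F]_n) (lam : F),
    [/\ M \in unitmx, lam != 0,
        forall v, qform A (map_mx s v *m M) = lam * s (qform A v)
      & forall x : point, val (p x) = semilin_image s M (val x)].

Definition PO (A : 'M[F]_n) : {set {perm point}} :=
  [set p : {perm point} | [exists M : 'M[F]_n,
     [&& M \in unitmx, [forall v, qform A (v *m M) == qform A v] &
         [forall x : point, val (p x) == semilin_image id M (val x)]]]].

(* POmega(V,Q) = image of Omega(V,Q) = O(V,Q)' on the points. *)
Definition POmega (A : 'M[F]_n) : {set {perm point}} := ([~: PO A, PO A])%g.

Definition orbital_rel (G : {set {perm point}}) (x y : point) : rel point :=
  fun u w => [exists g in G,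
    ((u == g x) && (w == g y)) || ((u == g y) && (w == g x))].

Definition within_dist (E : rel point) (X : {set point}) (k : nat) (u w : point) :=
  exists s : seq point, [/\ all (mem X) s, path E u s, last u s = w & (size s <= k)%N].

Definition graph_diam_le (E : rel point) (X : {set point}) (k : nat) :=
  forall u w, u \in X -> w \in X -> within_dist E X k u w.

(* diam(X,G) = d (d >= 1): every orbital graph has diameter <= d and some
   orbital graph has diameter > d-1, i.e. the maximum diameter is d. *)
Definition orbital_diam_eq (G : {set {perm point}}) (X : {set point}) (d : nat) :=
  (forall x y, x \in X -> y \in X -> x != y -> graph_diam_le (orbital_rel G x y) X d)
  /\ (exists x y, [/\ x \in X, y \in X, x != y &
                    ~ graph_diam_le (orbital_rel G x y) X d.-1]).

End Orth.

(* Main.v *)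
Require Import Defs.
From HB Require Import structures.
From mathcomp Require Import all_boot all_order all_algebra all_fingroup all_solvable.
From mathcomp Require Import all_field.
From mathcomp Require Import ring.
Set Implicit Arguments. Unset Strict Implicit. Unset Printing Implicit Defensive.
Import GRing.Theory.
Local Open Scope ring_scope.

Section FF.
Variable F : finFieldType.
Hypothesis Hodd : odd #|F|.

Lemma two_neq0 : (2 : F) != 0.
Proof.
apply/negP => /eqP h2.
have pc : (2%N \in [pchar F]) by rewrite inE /= h2 eqxx.
have o := @order_pprimeChar _ _ pc (1 : pPrimeCharType pc) (oner_neq0 F).
have := @order_dvdG _ [set: pPrimeCharType pc]%G _ (in_setT (1 : pPrimeCharType pc)).
rewrite o cardsT /= => h.
by move: h; rewrite dvdn2 Hodd.
Qed.
End FF.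

Section Squares.
Variable F : finFieldType.
Hypothesis Hodd : odd #|F|.

Definition sqset : {set F} := [set a ^+ 2 | a in [set: F]].

Lemma card_sqset : (#|F| < 2 * #|sqset|)%N.
Proof.
pose r (t : F) := odflt 0 [pick b | b ^+ 2 == t].
pose f (a : F) := (a ^+ 2, a == r (a ^+ 2)).
have finj : injective f.
  move=> a b [e1 e2].
  have : (a == b) || (a == - b) by rewrite -eqf_sqr e1.
  case/orP => [/eqP //| /eqP ab].
  move: e2; rewrite e1 ab.
  have hr : r (b ^+ 2) ^+ 2 = b ^+ 2.
    rewrite /r; case: pickP => [c /eqP //|/(_ b)]; by rewrite eqxx.
  have : (r (b ^+ 2) == b) || (r (b ^+ 2) == - b) by rewrite -eqf_sqr hr.
  case/orP => /eqP ->.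
  - by move=> h; apply/eqP; rewrite h.
  - by rewrite eqxx => h; apply/eqP; rewrite eq_sym -h.
have h1 : #|[set f a | a in [set: F]]| = #|F| by rewrite card_imset // cardsT.
have h2 : [set f a | a in [set: F]] \subset setX sqset [set: bool].
  apply/subsetP => x /imsetP [a _ ->]; rewrite inE /= in_setT andbT.
  by apply/imsetP; exists a; rewrite ?in_setT.
have := subset_leq_card h2; rewrite h1 cardsX cardsT card_bool muln2.
rewrite mul2n leq_eqVlt => /orP [/eqP e|//].
by move: Hodd; rewrite e odd_double.
Qed.

Lemma sum_two_squares (c1 c2 e : F) : c1 != 0 -> c2 != 0 ->
  exists a b : F, c1 * a ^+ 2 + c2 * b ^+ 2 = e.
Proof.
move=> h1 h2.
pose S1 := [set c1 * x | x in sqset].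
pose S2 := [set e - c2 * x | x in sqset].
have c1i : #|S1| = #|sqset| by apply: card_imset => x y /mulfI; apply.
have c2i : #|S2| = #|sqset|.
  by apply: card_imset => x y /= /addrI /oppr_inj /mulfI; apply.
have hU := cardsUI S1 S2; rewrite c1i c2i addnn -mul2n in hU.
have hF : (#|S1 :|: S2| <= #|F|)%N by apply: max_card.
have hS := card_sqset.
case: (set_0Vmem (S1 :&: S2)) => [e0|[x]].
  rewrite e0 cards0 addn0 in hU; move: hF; rewrite hU leqNgt.
  by rewrite (leq_trans _ hS).
rewrite inE => /andP [/imsetP [t1 /imsetP [a _ ->] ->] /imsetP [t2 /imsetP [b _ ->] e2]].
by exists a, b; rewrite e2 subrK.
Qed.
End Squares.


Section Bil.
Variables (F : finFieldType) (n : nat) (A : 'M[F]_n).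
Hypothesis HA : A^T = A.
Hypothesis Hodd : odd #|F|.

Definition bf (u w : 'rV[F]_n) : F := (u *m A *m w^T) 0 0.
Local Notation Q := (qform A).

Lemma QE v : Q v = bf v v. Proof. by []. Qed.

Lemma bfC u w : bf u w = bf w u.
Proof.
rewrite /bf -[u *m A *m w^T]trmxK [in LHS]mxE !trmx_mul !trmxK HA.
by rewrite mulmxA.
Qed.

Lemma bfDl u w x : bf (u + w) x = bf u x + bf w x.
Proof. by rewrite /bf !mulmxDl mxE. Qed.
Lemma bfZl c u x : bf (c *: u) x = c * bf u x.
Proof. by rewrite /bf -!scalemxAl mxE. Qed.
Lemma bfNl u x : bf (- u) x = - bf u x.
Proof. by rewrite -scaleN1r bfZl mulN1r. Qed.
Lemma bfBl u w x : bf (u - w) x = bf u x - bf w x.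
Proof. by rewrite bfDl bfNl. Qed.
Lemma bf0l x : bf 0 x = 0.
Proof. by rewrite -(scale0r 0) bfZl mul0r. Qed.
Lemma bfDr u w x : bf x (u + w) = bf x u + bf x w.
Proof. by rewrite bfC bfDl !(bfC x). Qed.
Lemma bfZr c u x : bf x (c *: u) = c * bf x u.
Proof. by rewrite bfC bfZl bfC. Qed.
Lemma bfNr u x : bf x (- u) = - bf x u.
Proof. by rewrite bfC bfNl bfC. Qed.
Lemma bfBr u w x : bf x (u - w) = bf x u - bf x w.
Proof. by rewrite bfDr bfNr. Qed.
Lemma bf0r x : bf x 0 = 0.
Proof. by rewrite bfC bf0l. Qed.

Lemma QD u w : Q (u + w) = Q u + Q w + 2 * bf u w.
Proof. rewrite !QE bfDl !bfDr (bfC w u); ring. Qed.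
Lemma QZ c u : Q (c *: u) = c ^+ 2 * Q u.
Proof. by rewrite !QE bfZl bfZr mulrA expr2. Qed.
Lemma QN u : Q (- u) = Q u.
Proof. by rewrite !QE bfNl bfNr opprK. Qed.
Lemma QB u w : Q (u - w) = Q u + Q w - 2 * bf u w.
Proof. by rewrite QD QN bfNr mulrN. Qed.
Lemma Q0 : Q 0 = 0.
Proof. by rewrite QE bf0l. Qed.

Lemma two_unit : (2 : F) != 0. Proof. exact: two_neq0. Qed.

(* polarization: isometries preserve bf *)
Lemma isom_bf (M : 'M[F]_n) : (forall v, Q (v *m M) = Q v) ->
  forall u w, bf (u *m M) (w *m M) = bf u w.
Proof.
move=> hM u w.
have := hM (u + w); rewrite mulmxDl !QD !hM => /addrI /mulfI; apply.
exact: two_unit.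
Qed.

Lemma mx_ext (M N : 'M[F]_n) : (forall v : 'rV_n, v *m M = v *m N) -> M = N.
Proof.
move=> h; apply/row_matrixP => i.
by rewrite -[M]mul1mx -[N]mul1mx !row_mul h.
Qed.

Lemma bf_mxE (u w : 'rV[F]_n) : u *m A *m w^T = (bf u w)%:M.
Proof. exact: mx11_scalar. Qed.

Definition refl (a : 'rV[F]_n) : 'M[F]_n :=
  1%:M - (2 / Q a) *: (A *m a^T *m a).

Lemma reflE v a : v *m refl a = v - (2 / Q a * bf v a) *: a.
Proof.
rewrite /refl mulmxBr mulmx1 -scalemxAr !mulmxA bf_mxE mul_scalar_mx.
by rewrite scalerA.
Qed.

Lemma bf_refl v w a : bf (v *m refl a) w = bf v w - 2 / Q a * bf v a * bf a w.
Proof. by rewrite reflE bfBl bfZl. Qed.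

Lemma refl_iso a v : Q a != 0 -> Q (v *m refl a) = Q v.
Proof.
move=> ha; rewrite reflE QB QZ bfZr; field.
by [].
Qed.

Lemma refl_bf a u w : Q a != 0 -> bf (u *m refl a) (w *m refl a) = bf u w.
Proof. by move=> ha; apply: isom_bf => v; apply: refl_iso. Qed.

Lemma refl_self a : Q a != 0 -> a *m refl a = - a.
Proof.
move=> ha; rewrite reflE -QE (_ : 2 / Q a * Q a = 2); last by field.
by rewrite scaler_nat mulr2n opprD addrA subrr add0r.
Qed.

Lemma refl_perp a v : bf v a = 0 -> v *m refl a = v.
Proof. by move=> h; rewrite reflE h mulr0 scale0r subr0. Qed.

Lemma refl_invol a : Q a != 0 -> refl a *m refl a = 1%:M.
Proof.
move=> ha; apply: mx_ext => v; rewrite mulmx1 mulmxA.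
rewrite [v *m refl a]reflE mulmxBl -scalemxAl refl_self // (reflE v a).
by rewrite scalerN opprK subrK.
Qed.

Lemma refl_unit a : Q a != 0 -> refl a \in unitmx.
Proof. by move=> ha; case: (mulmx1_unit (refl_invol ha)). Qed.

Lemma reflZ c a : c != 0 -> refl (c *: a) = refl a.
Proof.
move=> hc; apply: mx_ext => v; rewrite !reflE QZ bfZr scalerA.
case: (eqVneq (Q a) 0) => [->|ha]; first by rewrite mulr0 !invr0 !mulr0 !mul0r.
congr (_ - _ *: _); field.
by rewrite ha hc.
Qed.

Lemma reflN a : refl (- a) = refl a.
Proof. by rewrite -scaleN1r reflZ // oppr_eq0 oner_eq0. Qed.

Lemma refl_conj u a : Q u != 0 -> Q a != 0 ->
  refl u *m refl a *m refl u = refl (a *m refl u).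
Proof.
move=> hu ha; apply: mx_ext => v.
rewrite !mulmxA (reflE (v *m refl u) a) mulmxBl -scalemxAl.
rewrite -(mulmxA v) refl_invol // mulmx1 (reflE v (a *m refl u)) refl_iso //.
by rewrite -(refl_bf (v *m refl u) a hu) -(mulmxA v) refl_invol // mulmx1.
Qed.

Lemma refl_swapB x y : Q x = Q y -> Q (x - y) != 0 -> x *m refl (x - y) = y.
Proof.
move=> hxy h; rewrite reflE.
have -> : 2 / Q (x - y) * bf x (x - y) = 1.
  have e : Q (x - y) = 2 * bf x (x - y).
    by rewrite QB bfBr -QE -hxy; ring.
  rewrite e; field; apply/andP; split; last exact: two_unit.
  by apply: contra h => /eqP hb; rewrite e hb mulr0.
by rewrite scale1r opprB addrC subrK.
Qed.

Lemma refl_swapD x y : Q x = Q y -> Q (x + y) != 0 -> x *m refl (x + y) = - y.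
Proof.
move=> hxy h; have := @refl_swapB x (- y); rewrite opprK QN; exact.
Qed.

Lemma QB_QD x y : Q x != 0 -> Q x = Q y -> (Q (x - y) != 0) || (Q (x + y) != 0).
Proof.
move=> hx hxy; case: (eqVneq (Q (x - y)) 0) => h1 //=.
have e : Q (x + y) = 2 * 2 * Q x.
  have : Q (x - y) + Q (x + y) = 2 * 2 * Q x by rewrite QB QD -hxy; ring.
  by rewrite h1 add0r.
by rewrite e !mulf_neq0 // two_unit.
Qed.

End Bil.


Section Points.
Variables (F : finFieldType) (n : nat) (A : 'M[F]_n).
Hypothesis HA : A^T = A.
Hypothesis Hodd : odd #|F|.
Local Notation Q := (qform A).
Local Notation bf := (bf A).
Local Notation point := (point F n).
Local Notation line := (@line F n).

Lemma lineP (v w : 'rV[F]_n) : reflect (exists c, w = c *: v) (w \in line v).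
Proof.
apply: (iffP imsetP) => [[c _ ->]|[c ->]]; first by exists c.
by exists c.
Qed.

Lemma line_mem c v : c *: v \in line v.
Proof. by apply/lineP; exists c. Qed.

Lemma line_self v : v \in line v.
Proof. by rewrite -{1}[v]scale1r line_mem. Qed.

Lemma line_eqP (u w : 'rV[F]_n) : u != 0 -> w != 0 ->
  reflect (exists2 c, c != 0 & w = c *: u) (line u == line w).
Proof.
move=> hu hw; apply: (iffP eqP) => [e|[c hc ->]].
  have : w \in line u by rewrite e line_self.
  case/lineP => c ec; exists c => //; apply: contra hw => /eqP c0.
  by rewrite ec c0 scale0r.
apply/setP => x; apply/lineP/lineP => [[d ->]|[d ->]].
  by exists (d / c); rewrite scalerA mulfVK.
by exists (d * c); rewrite scalerA.
Qed.

Lemma is_point_line u : u != 0 -> is_point (line u).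
Proof. by move=> hu; apply/existsP; exists u; rewrite hu eqxx. Qed.

Lemma point_rep (p : point) : exists2 u, u != 0 & val p = line u.
Proof. by case: p => S /= /existsP [u /andP [hu /eqP ->]]; exists u. Qed.

Definition mkpt (u : 'rV[F]_n) (hu : u != 0) : point := exist _ (line u) (is_point_line hu).

Lemma semilin_line_id M u : semilin_image id M (line u) = line (u *m M).
Proof.
apply/setP => x; apply/imsetP/lineP => [[y /lineP [c ->] ->]|[c ->]].
  by exists c; rewrite map_mx_id // scalemxAl.
by exists (c *: u); rewrite ?line_mem // map_mx_id // scalemxAl.
Qed.

Lemma unit_row_neq0 (M : 'M[F]_n) (u : 'rV[F]_n) : M \in unitmx -> u != 0 -> u *m M != 0.
Proof.
move=> hM hu; apply: contra hu => /eqP h.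
by rewrite -[u]mulmx1 -(mulmxV hM) mulmxA h mul0mx.
Qed.

Definition pmf (M : 'M[F]_n) (p : point) : point :=
  insubd p (semilin_image id M (val p)).

Lemma pmfE M p u : M \in unitmx -> u != 0 -> val p = line u ->
  val (pmf M p) = line (u *m M).
Proof.
move=> hM hu e; rewrite /pmf e semilin_line_id insubdK //.
by apply: is_point_line; apply: unit_row_neq0.
Qed.

Lemma pmf_inj M : M \in unitmx -> injective (pmf M).
Proof.
move=> hM p1 p2 e.
have [u1 h1 e1] := point_rep p1; have [u2 h2 e2] := point_rep p2.
have := congr1 val e; rewrite (pmfE hM h1 e1) (pmfE hM h2 e2) => /eqP.
case/line_eqP; try by apply: unit_row_neq0.
move=> c hc ec; apply: val_inj; rewrite e1 e2; apply/eqP/line_eqP => //.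
exists c => //.
apply: (@row_free_inj _ 1 _ _ M); first by rewrite row_free_unit.
by rewrite /= ec scalemxAl.
Qed.

Definition pm (M : 'M[F]_n) : {perm point} :=
  @insubd _ _ {perm point} (1%g : {perm point}) ([ffun p => pmf M p] : {ffun point -> point}).

Lemma pmE M p : M \in unitmx -> pm M p = pmf M p.
Proof.
move=> hM.
have h : injectiveb ([ffun p => pmf M p] : {ffun point -> point}).
  by apply/injectiveP => x y; rewrite !ffunE; apply: pmf_inj.
have -> : pm M = Perm h by apply: val_inj; rewrite /pm insubdK.
by rewrite -pvalE /= ffunE.
Qed.

Lemma pm_line M p u : M \in unitmx -> u != 0 -> val p = line u ->
  val (pm M p) = line (u *m M).
Proof. by move=> hM hu e; rewrite pmE //; apply: pmfE. Qed.

Lemma pmM M N : M \in unitmx -> N \in unitmx -> pm (M *m N) = (pm M * pm N)%g.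
Proof.
move=> hM hN; apply/permP => p; rewrite permM.
have [u hu e] := point_rep p.
apply: val_inj; rewrite (pm_line _ hu e) ?unitmx_mul ?hM ?hN //.
rewrite (pm_line hN _ (pm_line hM hu e)) ?mulmxA //.
exact: unit_row_neq0.
Qed.

Lemma pm1 : pm 1%:M = 1%g.
Proof.
apply/permP => p; rewrite perm1; have [u hu e] := point_rep p.
by apply: val_inj; rewrite (pm_line _ hu e) ?unitmx1 // mulmx1.
Qed.

Definition isom (M : 'M[F]_n) := forall v, Q (v *m M) = Q v.

Lemma pm_PO M : M \in unitmx -> isom M -> pm M \in PO A.
Proof.
move=> hM iM; rewrite inE; apply/existsP; exists M.
rewrite hM /=; apply/andP; split; first by apply/forallP => v; rewrite iM.
apply/forallP => p; have [u hu e] := point_rep p.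
by rewrite (pm_line hM hu e) e semilin_line_id.
Qed.

Definition isOm (M : 'M[F]_n) := [/\ M \in unitmx, isom M & pm M \in POmega A].

Lemma isOm_mul M N : isOm M -> isOm N -> isOm (M *m N).
Proof.
move=> [h1 h2 h3] [k1 k2 k3]; split; first by rewrite unitmx_mul h1.
  by move=> v; rewrite mulmxA k2 h2.
by rewrite pmM // groupM.
Qed.

Lemma isOm1 : isOm 1%:M.
Proof. by split; [exact: unitmx1 | move=> v; rewrite mulmx1 | rewrite pm1 group1]. Qed.

Lemma pm_refl_inv a : Q a != 0 -> ((pm (refl A a))^-1)%g = pm (refl A a).
Proof.
move=> ha; apply/eqP; rewrite eq_invg_mul -pmM ?refl_unit //.
by rewrite refl_invol // pm1.
Qed.

Lemma isOm_pair a b : Q a != 0 -> Q a = Q b -> isOm (refl A a *m refl A b).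
Proof.
move=> ha hab.
have hb : Q b != 0 by rewrite -hab.
split; first by rewrite unitmx_mul !refl_unit.
  by move=> v; rewrite mulmxA !refl_iso.
have [u [hu au]] : exists u, Q u != 0 /\ (a *m refl A u = b \/ a *m refl A u = - b).
  case/orP: (QB_QD HA Hodd ha hab) => h.
    by exists (a - b); split => //; left; apply: refl_swapB.
  by exists (a + b); split => //; right; apply: refl_swapD.
have e : refl A a *m refl A b = refl A a *m refl A u *m refl A a *m refl A u.
  rewrite -!mulmxA [refl A u *m _]mulmxA refl_conj //.
  by case: au => ->; rewrite ?reflN.
rewrite e !pmM ?unitmx_mul ?refl_unit //.
have -> : (pm (refl A a) * pm (refl A u) * pm (refl A a) * pm (refl A u))%g
   = [~ pm (refl A a), pm (refl A u)]%g.
  by rewrite /commg /conjg !pm_refl_inv // !mulgA.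
by apply: mem_commg; apply: pm_PO; rewrite ?refl_unit // => v; rewrite refl_iso.
Qed.

Lemma isOm_quad a b c d : Q a != 0 -> Q b != 0 -> Q a = Q d -> Q b = Q c ->
  isOm (refl A a *m refl A b *m refl A c *m refl A d).
Proof.
move=> ha hb had hbc.
have -> : refl A a *m refl A b *m refl A c *m refl A d =
   (refl A (b *m refl A a) *m refl A (c *m refl A a)) *m (refl A a *m refl A d).
  rewrite -!refl_conj // -?hbc //.
  rewrite !mulmxA -[refl A a *m refl A b *m refl A a *m refl A a]mulmxA refl_invol // mulmx1.
  by rewrite -[refl A a *m refl A b *m refl A c *m refl A a *m refl A a]mulmxA refl_invol // mulmx1.
apply: isOm_mul; apply: isOm_pair => //.
- by rewrite refl_iso.
- by rewrite !refl_iso // -hbc.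
Qed.

End Points.


Section Rep.
Variables (F : finFieldType) (n : nat) (A : 'M[F]_n).
Hypothesis HA : A^T = A.
Hypothesis Hodd : odd #|F|.
Hypothesis Hdet : \det A != 0.
Local Notation Q := (qform A).
Local Notation bf := (bf A).

Lemma Aunit : A \in unitmx.
Proof. by rewrite unitmxE unitfE. Qed.

Definition gram k (L : 'M[F]_(k, n)) := L *m A *m L^T.
Definition perp k (L : 'M[F]_(k, n)) (z : 'rV[F]_n) := z *m A *m L^T = 0.

Lemma nonzero_row m k (M : 'M[F]_(m, k)) : M != 0 -> exists i, row i M != 0.
Proof.
move=> hM; apply/existsP; apply: contraR hM => /existsPn h.
by apply/eqP/row_matrixP => i; rewrite row0; apply/eqP; exact: (negbNE (h i)).
Qed.

Lemma nonzero_entry (w : 'rV[F]_n) : w != 0 -> exists j, w 0 j != 0.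
Proof.
move=> hw; apply/existsP; apply: contraR hw => /existsPn h.
apply/eqP/matrixP => i j; rewrite ord1 mxE; apply/eqP; exact: (negbNE (h j)).
Qed.

Lemma exists_perp {k} {L : 'M[F]_(k, n)} : (k < n)%N -> exists z, z != 0 /\ perp L z.
Proof.
move=> hk; pose B := A *m L^T.
have : kermx B != 0.
  rewrite -mxrank_eq0 mxrank_ker -lt0n subn_gt0.
  exact: leq_ltn_trans (rank_leq_col B) hk.
case/nonzero_row => i hi; exists (row i (kermx B)); split => //.
by rewrite /perp -mulmxA -row_mul mulmx_ker row0.
Qed.

Lemma bf_delta (z : 'rV[F]_n) j : bf z (delta_mx 0 j) = (z *m A) 0 j.
Proof. by rewrite /bf trmx_delta -colE mxE. Qed.

Lemma perp_bf k (L : 'M[F]_(k, n)) z (w : 'rV[F]_k) : perp L z -> bf z (w *m L) = 0.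
Proof.
move=> h; rewrite /bf trmx_mul mulmxA.
by rewrite h mul0mx mxE.
Qed.

Lemma nondeg_perp {k} {L : 'M[F]_(k, n)} {z} : gram L \in unitmx -> z != 0 -> perp L z ->
  exists y, perp L y /\ bf z y != 0.
Proof.
move=> hG hz hzL.
have : z *m A != 0 by apply: unit_row_neq0 => //; exact: Aunit.
case/nonzero_entry => j hj.
pose y0 : 'rV[F]_n := delta_mx 0 j.
exists (y0 - y0 *m A *m L^T *m invmx (gram L) *m L); split.
  rewrite /perp !mulmxBl -!mulmxA [L *m (A *m L^T)]mulmxA.
  by rewrite -/(gram L) mulVmx // mulmx1 subrr.
  by rewrite bfBr // perp_bf // subr0 bf_delta.
Qed.

Lemma aniso_perp {k} {L : 'M[F]_(k, n)} : (k < n)%N -> gram L \in unitmx ->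
  exists p, perp L p /\ Q p != 0.
Proof.
move=> hk hG; have [z [hz hzL]] := exists_perp (L := L) hk.
have [y [hyL hzy]] := nondeg_perp hG hz hzL.
case: (eqVneq (Q z) 0) => hQz; last by exists z.
case: (eqVneq (Q y) 0) => hQy; last by exists y.
exists (z + y); split.
  by rewrite /perp !mulmxDl hzL hyL addr0.
rewrite QD // hQz hQy !add0r mulf_neq0 //; exact: two_unit.
Qed.

Lemma perp_col k (L : 'M[F]_(k, n)) p z :
  perp (col_mx L p) z <-> perp L z /\ bf z p = 0.
Proof.
rewrite /perp tr_col_mx mul_mx_row; split.
  move/eqP; rewrite row_mx_eq0 => /andP [/eqP h1 /eqP h2]; split => //.
  by rewrite /bf h2 mxE.
case=> -> h2; apply/eqP; rewrite row_mx_eq0 eqxx /=.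
by rewrite bf_mxE h2 raddf0.
Qed.

Lemma gram_ext {k} {L : 'M[F]_(k, n)} {p} : gram L \in unitmx -> perp L p -> Q p != 0 ->
  gram (col_mx L p) \in unitmx.
Proof.
move=> hG hp hQ.
rewrite /gram tr_col_mx mul_col_mx mul_col_row hp.
rewrite unitmxE det_ublock unitrM -!unitmxE -/(gram L) hG /= unitmxE det_mx11 unitfE.
by [].

Qed.

Lemma gram1 (v : 'rV[F]_n) : Q v != 0 -> gram v \in unitmx.
Proof. by move=> h; rewrite unitmxE det_mx11 unitfE. Qed.

Lemma perp1 (v z : 'rV[F]_n) : perp v z <-> bf z v = 0.
Proof.
rewrite /perp bf_mxE; split; first by move/matrixP/(_ 0 0); rewrite !mxE /= mulr1n.
by move=> ->; rewrite raddf0.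
Qed.

Lemma orth_pair {k} {L : 'M[F]_(k, n)} : (k.+1 < n)%N -> gram L \in unitmx ->
  exists p r, [/\ perp L p, perp L r, Q p != 0, Q r != 0 & bf p r = 0].
Proof.
move=> hk hG.
have [p [hp hQp]] := aniso_perp (ltnW hk) hG.
have hG' := gram_ext hG hp hQp.
have hk' : (k + 1 < n)%N by rewrite addn1.
have [r [hr hQr]] := aniso_perp (k := k + 1) (L := col_mx L p) hk' hG'.
case/perp_col: hr => hr1 hr2.
by exists p, r; split => //; rewrite bfC.
Qed.

Lemma rep_perp {k} {L : 'M[F]_(k, n)} e : (k.+1 < n)%N -> gram L \in unitmx ->
  exists d, perp L d /\ Q d = e.
Proof.
move=> hk hG; have [p [r [hp hr hQp hQr hpr]]] := orth_pair hk hG.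
have [a [b e2]] := sum_two_squares Hodd e hQp hQr.
exists (a *: p + b *: r); split.
  by rewrite /perp !mulmxDl -!scalemxAl hp hr !scaler0 addr0.
rewrite QD // !QZ // (bfZl A) (bfZr HA) hpr -e2; ring.
Qed.

Lemma iso_perp {k} {L : 'M[F]_(k, n)} : (k.+2 < n)%N -> gram L \in unitmx ->
  exists t, [/\ perp L t, t != 0 & Q t = 0].
Proof.
move=> hk hG.
have [s [hs hQs]] := aniso_perp (ltnW (ltnW hk)) hG.
have hG' := gram_ext hG hs hQs.
have hk' : ((k + 1).+1 < n)%N by rewrite addn1.
have [p [r [hp hr hQp hQr hpr]]] := orth_pair (k := k + 1) (L := col_mx L s) hk' hG'.
case/perp_col: hp => hp1 hp2; case/perp_col: hr => hr1 hr2.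
have [a [b e2]] := sum_two_squares Hodd (- Q s) hQp hQr.
exists (a *: p + b *: r + s); split.
- by rewrite /perp !mulmxDl -!scalemxAl hp1 hr1 hs !scaler0 !addr0.
- apply/eqP => h0; move: hQs.
  have : bf (a *: p + b *: r + s) s = 0 by rewrite h0 (bf0l A).
  rewrite !(bfDl A) !(bfZl A) hp2 hr2 !mulr0 !add0r QE => ->.
  by rewrite eqxx.
- rewrite !(QD HA) !(QZ HA) !(bfDl A) !(bfZl A) !(bfZr HA) hpr hp2 hr2.
  by rewrite (mulrC (a ^+ 2)) (mulrC (b ^+ 2)) e2; ring.
Qed.

End Rep.


Section Rep2.
Variables (F : finFieldType) (n : nat) (A : 'M[F]_n).
Hypothesis HA : A^T = A.
Hypothesis Hodd : odd #|F|.
Hypothesis Hdet : \det A != 0.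
Local Notation Q := (qform A).
Local Notation bf := (bf A).
Local Notation bfC := (bfC HA).
Local Notation bfDl := (bfDl A).
Local Notation bfZl := (bfZl A).
Local Notation bfNl := (bfNl A).
Local Notation bfBl := (bfBl A).
Local Notation bf0l := (bf0l A).
Local Notation bfDr := (bfDr HA).
Local Notation bfZr := (bfZr HA).
Local Notation bfNr := (bfNr HA).
Local Notation bfBr := (bfBr HA).
Local Notation bf0r := (bf0r HA).
Local Notation QD := (QD HA).
Local Notation QZ := (QZ HA).
Local Notation QN := (QN HA).
Local Notation QB := (QB HA).
Local Notation QE := (QE A).
Local Notation refl := (refl A).
Local Notation two_unit := (two_unit Hodd).
Local Notation perp1 := (perp1 A).
Local Notation perp_col := (perp_col A).
Hypothesis Hn : (5 <= n)%N.

Lemma n3 : (1.+1 < n)%N. Proof. by apply: leq_trans Hn. Qed.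
Lemma n4 : (1.+2 < n)%N. Proof. by apply: leq_trans Hn. Qed.
Lemma n4' : ((1 + 1).+1 < n)%N. Proof. by apply: leq_trans Hn. Qed.
Lemma n5 : ((1 + 1 + 1).+1 < n)%N. Proof. by apply: leq_trans Hn. Qed.

Lemma rep1 v e : Q v != 0 -> exists d, bf d v = 0 /\ Q d = e.
Proof.
move=> hv; have [d [hd hQ]] := rep_perp HA Hodd Hdet (L := v) e n3 (gram1 hv).
by exists d; split => //; apply/perp1.
Qed.

Lemma iso1 v : Q v != 0 -> exists t, [/\ bf t v = 0, t != 0 & Q t = 0].
Proof.
move=> hv; have [t [ht h0 hQ]] := iso_perp HA Hodd Hdet (L := v) n4 (gram1 hv).
by exists t; split => //; apply/perp1.
Qed.

Lemma nondeg1 v z : Q v != 0 -> z != 0 -> bf z v = 0 ->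
  exists y, bf y v = 0 /\ bf z y != 0.
Proof.
move=> hv hz hzv.
have [y [hy hzy]] := nondeg_perp HA Hdet (L := v) (gram1 hv) hz (proj2 (perp1 _ _) hzv).
by exists y; split => //; apply/perp1.
Qed.

Lemma rep2 v b e : Q v != 0 -> exists d, [/\ bf d v = 0, bf d b = 0 & Q d = e].
Proof.
move=> hv.
pose mu := bf b v / Q v.
pose b' := b - mu *: v.
have hb'v : bf b' v = 0 by rewrite bfBl bfZl -QE /mu mulfVK // subrr.
have key : forall d, bf d v = 0 -> bf d b = bf d b'.
  by move=> d hd; rewrite bfBr bfZr hd mulr0 subr0.
clearbody b'.
case: (eqVneq b' 0) => hb0.
  have [d [hd hQ]] := rep1 e hv.
  by exists d; split => //; rewrite key // hb0 bf0r.
case: (eqVneq (Q b') 0) => hQb; last first.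
  have hG := gram_ext (gram1 hv) (proj2 (perp1 _ _) hb'v) hQb.
  have [d [hd hQ]] := rep_perp HA Hodd Hdet e n4' hG.
  case/perp_col: hd => /perp1 hd1 hd2.
  by exists d; split => //; rewrite key.
have [y [hyv hby]] := nondeg1 hv hb0 hb'v.
pose y1 := (bf b' y)^-1 *: y.
have hy1v : bf y1 v = 0 by rewrite bfZl hyv mulr0.
have hby1 : bf b' y1 = 1 by rewrite bfZr mulVf.
clearbody y1.
pose c := y1 - (Q y1 / 2) *: b'.
have hcv : bf c v = 0 by rewrite bfBl bfZl hy1v hb'v mulr0 subrr.
have hbc : bf b' c = 1 by rewrite bfBr bfZr -QE hQb mulr0 subr0.
have hQc : Q c = 0.
  rewrite QB QZ hQb mulr0 addr0 bfZr (bfC y1) hby1 mulr1.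
  by field; exact: two_unit.
clearbody c.
pose h1 := b' + c; pose h2 := b' - c.
have hQ1 : Q h1 = 2 by rewrite QD hQb hQc hbc; ring.
have hQ2 : Q h2 = - 2 by rewrite QB hQb hQc hbc; ring.
have h12 : bf h2 h1 = 0.
  by rewrite bfBl !bfDr -!QE hQb hQc hbc (bfC c) hbc; ring.
have h1v : bf h1 v = 0 by rewrite bfDl hb'v hcv addr0.
have h2v : bf h2 v = 0 by rewrite bfBl hb'v hcv subrr.
have hQ1' : Q h1 != 0 by rewrite hQ1 two_unit.
have hQ2' : Q h2 != 0 by rewrite hQ2 oppr_eq0 two_unit.
have hG1 := gram_ext (gram1 hv) (proj2 (perp1 _ _) h1v) hQ1'.
have hG2 := gram_ext hG1 (proj2 (perp_col _ _ _) (conj (proj2 (perp1 _ _) h2v) h12)) hQ2'.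
have [d [hd hQ]] := rep_perp HA Hodd Hdet e n5 hG2.
case/perp_col: hd => /perp_col [/perp1 hd1 hd2] hd3.
exists d; split => //; rewrite key //.
have : bf d (h1 + h2) = 0 by rewrite bfDr hd2 hd3 addr0.
have -> : h1 + h2 = 2 *: b'.
  by rewrite /h1 /h2 addrACA subrr addr0 scaler_nat mulr2n.
rewrite bfZr => /eqP; rewrite mulf_eq0 (negbTE two_unit) => /eqP //.
Qed.

End Rep2.


Section Witt.
Variables (F : finFieldType) (n : nat) (A : 'M[F]_n).
Hypothesis HA : A^T = A.
Hypothesis Hodd : odd #|F|.
Hypothesis Hdet : \det A != 0.
Local Notation Q := (qform A).
Local Notation bf := (bf A).
Local Notation bfC := (bfC HA).
Local Notation bfDl := (bfDl A).
Local Notation bfZl := (bfZl A).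
Local Notation bfNl := (bfNl A).
Local Notation bfBl := (bfBl A).
Local Notation bf0l := (bf0l A).
Local Notation bfDr := (bfDr HA).
Local Notation bfZr := (bfZr HA).
Local Notation bfNr := (bfNr HA).
Local Notation bfBr := (bfBr HA).
Local Notation bf0r := (bf0r HA).
Local Notation QD := (QD HA).
Local Notation QZ := (QZ HA).
Local Notation QN := (QN HA).
Local Notation QB := (QB HA).
Local Notation QE := (QE A).
Local Notation refl := (refl A).
Local Notation two_unit := (two_unit Hodd).
Local Notation perp1 := (perp1 A).
Local Notation perp_col := (perp_col A).
Hypothesis Hn : (5 <= n)%N.
Local Notation isOm := (isOm A).
Local Notation isOm_pair := (isOm_pair HA Hodd).
Local Notation isOm_quad := (isOm_quad HA Hodd).
Local Notation refl_swapB := (refl_swapB HA Hodd).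
Local Notation refl_swapD := (refl_swapD HA Hodd).
Local Notation QB_QD := (QB_QD HA Hodd).
Local Notation refl_iso := (refl_iso HA).
Local Notation rep1 := (rep1 HA Hodd Hdet Hn).
Local Notation rep2 := (rep2 HA Hodd Hdet Hn).
Local Notation iso1 := (iso1 HA Hodd Hdet Hn).
Local Notation nondeg1 := (nondeg1 HA Hdet).

Lemma trans_om v w : Q v != 0 -> Q v = Q w ->
  exists M, isOm M /\ (v *m M = w \/ v *m M = - w).
Proof.
move=> hv hvw.
have [u [hu vu]] : exists u, Q u != 0 /\ (v *m refl u = w \/ v *m refl u = - w).
  case/orP: (QB_QD hv hvw) => h.
    by exists (v - w); split => //; left; apply: refl_swapB.
  by exists (v + w); split => //; right; apply: refl_swapD.
have hw0 : Q w != 0 by rewrite -hvw.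
have [d [hdw hQd]] := rep1 (Q u) hw0.
exists (refl u *m refl d); split; first by apply: isOm_pair => //; rewrite hQd.
have hw : w *m refl d = w by apply: refl_perp; rewrite bfC.
case: vu => e; [left | right]; rewrite mulmxA e //.
by rewrite mulNmx hw.
Qed.

Lemma finish1 (v a b u : 'rV[F]_n) : Q v != 0 -> Q u != 0 -> bf u v = 0 -> a *m refl u = b ->
  exists M, [/\ isOm M, v *m M = v & a *m M = b].
Proof.
move=> hv hu huv hab.
have [d [hdv hdb hQd]] := rep2 b (Q u) hv.
exists (refl u *m refl d); split.
- by apply: isOm_pair => //; rewrite hQd.
- by rewrite mulmxA !refl_perp // bfC.
- by rewrite mulmxA hab refl_perp // bfC.
Qed.

Lemma finish2 (v a b u w : 'rV[F]_n) : Q v != 0 -> Q u != 0 -> Q w != 0 -> bf u v = 0 -> bf w v = 0 ->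
  a *m refl u *m refl w = b ->
  exists M, [/\ isOm M, v *m M = v & a *m M = b].
Proof.
move=> hv hu hw huv hwv hab.
have [d1 [hd1v hd1b hQd1]] := rep2 b (Q u) hv.
have [d2 [hd2v hd2b hQd2]] := rep2 b (Q w) hv.
exists (refl u *m refl w *m refl d2 *m refl d1); split.
- by apply: isOm_quad => //; rewrite ?hQd1 ?hQd2.
- by rewrite !mulmxA !refl_perp // bfC.
- by rewrite !mulmxA hab !refl_perp // bfC.
Qed.

Lemma avoid2 (x1 x2 : F) : exists t, t != x1 /\ t != x2.
Proof.
have hF : (2 < #|F|)%N.
  have h1 : (1 < #|F|)%N.
    rewrite (cardD1 (0 : F)) (cardD1 (1 : F)) !inE oner_neq0 /=.
    by rewrite add1n ltnS add1n ltnS.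
  by move: Hodd; case: #|F| h1 => [|[|[|k]]].
have hc : (#|[set x1; x2]| < #|F|)%N.
  by rewrite cards2; apply: leq_ltn_trans hF; case: (_ != _).
 have : exists t, t \notin [set x1; x2].
  apply/existsP; apply: contraLR hc => /existsPn h; rewrite -leqNgt.
  apply: subset_leq_card; apply/subsetP => t _; exact: negbNE (h t).
by case=> t; rewrite !inE negb_or => /andP [h1 h2]; exists t.
Qed.


Lemma lift_fix (v a a' b b' : 'rV[F]_n) (mu : F) (T : 'M[F]_n) :
  a = a' + mu *: v -> b = b' + mu *: v -> v *m T = v -> a' *m T = b' -> a *m T = b.
Proof. by move=> -> -> hv ha; rewrite mulmxDl -scalemxAl hv ha. Qed.

Lemma witt_stab (v a b : 'rV[F]_n) : Q v != 0 -> Q a = Q b -> bf v a = bf v b ->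
  (forall c, a != c *: v) -> (forall c, b != c *: v) ->
  exists M, [/\ isOm M, v *m M = v & a *m M = b].
Proof.
move=> hv hab hvab ha hb.
pose mu := bf v a / Q v.
pose a' := a - mu *: v; pose b' := b - mu *: v.
have ea : a = a' + mu *: v by rewrite subrK.
have eb : b = b' + mu *: v by rewrite subrK.
have ha'v : bf a' v = 0 by rewrite bfBl bfZl -QE bfC mulfVK // subrr.
have hb'v : bf b' v = 0 by rewrite bfBl bfZl -QE bfC -hvab mulfVK // subrr.
have hQ' : Q a' = Q b'.
  rewrite /a' /b' !QB !QZ !bfZr (bfC a) (bfC b) -hvab hab //.
have ha0 : a' != 0 by rewrite subr_eq0 ha.
have hb0 : b' != 0 by rewrite subr_eq0 hb.
clearbody a' b'.
have fix1 : forall T, v *m T = v -> a' *m T = b' -> a *m T = b.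
  by move=> T; apply: lift_fix ea eb.
case: (eqVneq (Q a') 0) => hQa; last first.
  case/orP: (QB_QD hQa hQ') => h.
    have hu0 : bf (a' - b') v = 0 by rewrite bfBl ha'v hb'v subrr.
    apply: (finish1 hv h hu0); apply: fix1; last by apply: refl_swapB.
    by apply: refl_perp; rewrite bfC hu0.
  have hQb : Q b' != 0 by rewrite -hQ'.
  have hu0 : bf (a' + b') v = 0 by rewrite bfDl ha'v hb'v addr0.
  apply: (finish2 hv h hQb hu0 hb'v); rewrite -mulmxA; apply: fix1; rewrite mulmxA.
    rewrite [v *m refl _]refl_perp; last by rewrite bfC hu0.
    by rewrite refl_perp // bfC hb'v.
  by rewrite refl_swapD // mulNmx refl_self // opprK.
have hQb : Q b' = 0 by rewrite -hQ'.
case: (eqVneq (bf a' b') 0) => hab'; last first.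
  have hu : Q (a' - b') != 0.
    by rewrite QB hQa hQb !add0r oppr_eq0 mulf_neq0 // two_unit.
  have hu0 : bf (a' - b') v = 0 by rewrite bfBl ha'v hb'v subrr.
  apply: (finish1 hv hu hu0); apply: fix1; last by apply: refl_swapB; rewrite ?hQa ?hQb.
  by apply: refl_perp; rewrite bfC hu0.
have [e1 [he1v ha'e1]] := nondeg1 hv ha0 ha'v.
have [e2 [he2v hb'e2]] := nondeg1 hv hb0 hb'v.
have [t [ht1 ht2]] := avoid2 (- bf a' e1 / bf a' e2) (- bf b' e1 / bf b' e2).
pose e := e1 + t *: e2.
have hev : bf e v = 0 by rewrite bfDl bfZl he1v he2v mulr0 addr0.
have hae : bf a' e != 0.
  rewrite bfDr bfZr; case: (eqVneq (bf a' e2) 0) => h2.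
    by rewrite h2 mulr0 addr0.
  apply: contra ht1 => h; apply/eqP; apply: (mulIf h2).
  transitivity (- bf a' e1); last by field.
  by apply/eqP; rewrite -addr_eq0 addrC.
have hbe : bf b' e != 0.
  rewrite bfDr bfZr.
  apply: contra ht2 => h; apply/eqP; apply: (mulIf hb'e2).
  transitivity (- bf b' e1); last by field.
  by apply/eqP; rewrite -addr_eq0 addrC.
clearbody e.
pose kap := - Q e / (2 * bf a' e).
pose c := e + kap *: a'.
have hcv : bf c v = 0 by rewrite bfDl bfZl ha'v mulr0 addr0.
have hQc : Q c = 0.
  rewrite /c QD QZ hQa mulr0 addr0 bfZr (bfC e) /kap.
  by field; rewrite hae two_unit.
have hac : bf a' c = bf a' e by rewrite bfDr bfZr -QE hQa mulr0 addr0.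
have hbc : bf b' c = bf b' e by rewrite bfDr bfZr (bfC b' a') hab' mulr0 addr0.
clearbody c.
have hu1 : Q (a' - c) != 0.
  by rewrite QB hQa hQc !add0r oppr_eq0 mulf_neq0 // ?two_unit // hac.
have hu2 : Q (c - b') != 0.
  by rewrite QB hQb hQc !add0r oppr_eq0 mulf_neq0 // ?two_unit // bfC hbc.
have hu1v : bf (a' - c) v = 0 by rewrite bfBl ha'v hcv subrr.
have hu2v : bf (c - b') v = 0 by rewrite bfBl hb'v hcv subrr.
apply: (finish2 hv hu1 hu2 hu1v hu2v); rewrite -mulmxA; apply: fix1; rewrite mulmxA.
  rewrite [v *m refl _]refl_perp; last by rewrite bfC hu1v.
  by rewrite refl_perp // bfC hu2v.
by rewrite refl_swapB ?hQa ?hQc // refl_swapB ?hQc ?hQb.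
Qed.

End Witt.


Section Semi.
Variables (F : finFieldType) (n : nat) (A : 'M[F]_n).
Hypothesis HA : A^T = A.
Hypothesis Hodd : odd #|F|.
Local Notation Q := (qform A).
Local Notation bf := (bf A).
Local Notation QD := (QD HA).
Local Notation QZ := (QZ HA).
Local Notation bfZl := (bfZl A).
Local Notation bfZr := (bfZr HA).
Local Notation point := (point F n).

Lemma semi_bf (s : {rmorphism F -> F}) (M : 'M[F]_n) lam :
  (forall v, Q (map_mx s v *m M) = lam * s (Q v)) ->
  forall u w, bf (map_mx s u *m M) (map_mx s w *m M) = lam * s (bf u w).
Proof.
move=> hQ u w.
have := hQ (u + w); rewrite map_mxD mulmxDl !QD !hQ !rmorphD rmorphM /= rmorph_nat => h.
apply: (mulfI (two_unit Hodd)); apply: (addrI (lam * s (Q u) + lam * s (Q w))).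
by rewrite h; ring.
Qed.

Lemma semi_imgP (s : {rmorphism F -> F}) (M : 'M[F]_n) u x :
  x \in semilin_image s M (line u) -> exists c, x = s c *: (map_mx s u *m M).
Proof.
case/imsetP => y /(lineP) [c ->] ->; exists c.
by rewrite map_mxZ scalemxAl.
Qed.

Lemma semi_img_mem (s : {rmorphism F -> F}) (M : 'M[F]_n) u :
  map_mx s u *m M \in semilin_image s M (line u).
Proof. by apply/imsetP; exists u => //; exact: line_self. Qed.

Lemma semi_perp (g : {perm point}) (p1 p2 : point) u1 u2 w1 w2 :
  induced_by_semisim A g ->
  val p1 = line u1 -> val p2 = line u2 -> val (g p1) = line w1 -> val (g p2) = line w2 ->
  bf u1 u2 = 0 -> bf w1 w2 = 0.
Proof.
case=> s [M [lam [hM hl hQ hg]]] e1 e2 f1 f2 h.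
have : w1 \in val (g p1) by rewrite f1 line_self.
rewrite hg e1 => /semi_imgP [c1 ->].
have : w2 \in val (g p2) by rewrite f2 line_self.
rewrite hg e2 => /semi_imgP [c2 ->].
by rewrite bfZl bfZr (semi_bf hQ) h rmorph0 !mulr0.
Qed.

Lemma semi_fix (g : {perm point}) (x0 p : point) v0 u :
  induced_by_semisim A g -> v0 != 0 -> u != 0 ->
  val x0 = line v0 -> g x0 = x0 -> val p = line u -> Q u = Q v0 ->
  exists r, [/\ r != 0, val (g p) = line r & Q r = Q v0].
Proof.
case=> s [M [lam [hM hl hQ hg]]] hv0 hu e0 gx e hQu.
have : v0 \in val (g x0) by rewrite gx e0 line_self.
rewrite hg e0 => /semi_imgP [c hc].
have hsc : s c != 0 by apply: contra hv0 => /eqP h; rewrite hc h scale0r.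
pose U := map_mx s u *m M.
have hU : U != 0 by apply: unit_row_neq0 => //; rewrite map_mx_eq0.
have [r' hr' er'] := point_rep (g p).
have : U \in line r' by rewrite -er' hg e semi_img_mem.
case/lineP => k hk.
have hk0 : k != 0 by apply: contra hU => /eqP h; rewrite hk h scale0r.
exists (s c *: U); split.
- by rewrite scaler_eq0 negb_or hsc.
- rewrite er'; apply/eqP/line_eqP => //; first by rewrite scaler_eq0 negb_or hsc.
  by exists (s c * k); [rewrite mulf_neq0 | rewrite hk scalerA].
- have e1 : Q v0 = s c ^+ 2 * (lam * s (Q v0)) by rewrite {1}hc QZ hQ.
  by rewrite QZ /U hQ hQu -e1.
Qed.

End Semi.


Section Main.
Variables (F : finFieldType) (n : nat) (A : 'M[F]_n).
Hypothesis HA : A^T = A.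
Hypothesis Hodd : odd #|F|.
Hypothesis Hdet : \det A != 0.
Local Notation Q := (qform A).
Local Notation bf := (bf A).
Local Notation bfC := (bfC HA).
Local Notation bfDl := (bfDl A).
Local Notation bfZl := (bfZl A).
Local Notation bfNl := (bfNl A).
Local Notation bfBl := (bfBl A).
Local Notation bf0l := (bf0l A).
Local Notation bfDr := (bfDr HA).
Local Notation bfZr := (bfZr HA).
Local Notation bfNr := (bfNr HA).
Local Notation bfBr := (bfBr HA).
Local Notation bf0r := (bf0r HA).
Local Notation QD := (QD HA).
Local Notation QZ := (QZ HA).
Local Notation QN := (QN HA).
Local Notation QB := (QB HA).
Local Notation QE := (QE A).
Local Notation refl := (refl A).
Local Notation two_unit := (two_unit Hodd).
Local Notation perp1 := (perp1 A).
Local Notation perp_col := (perp_col A).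
Hypothesis Hn : (5 <= n)%N.
Local Notation isOm := (isOm A).
Local Notation isOm_pair := (isOm_pair HA Hodd).
Local Notation isOm_quad := (isOm_quad HA Hodd).
Local Notation refl_swapB := (refl_swapB HA Hodd).
Local Notation refl_swapD := (refl_swapD HA Hodd).
Local Notation QB_QD := (QB_QD HA Hodd).
Local Notation refl_iso := (refl_iso HA).
Local Notation rep1 := (rep1 HA Hodd Hdet Hn).
Local Notation rep2 := (rep2 HA Hodd Hdet Hn).
Local Notation iso1 := (iso1 HA Hodd Hdet Hn).
Local Notation nondeg1 := (nondeg1 HA Hdet).
Local Notation point := (point F n).
Local Notation line := (@line F n).
Variable G : {group {perm point}}.
Variable x0 : point.
Hypothesis HG : (POmega A \subset G)%g.
Hypothesis Hsemi : forall g, g \in G -> induced_by_semisim A g.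
Variable v0 : 'rV[F]_n.
Hypothesis hv0 : v0 != 0.
Hypothesis ex0 : val x0 = line v0.
Hypothesis hQ0 : Q v0 != 0.
Local Notation X := (orbit 'P G x0).

Lemma isOm_G M : isOm M -> pm M \in G.
Proof. by case=> _ _ h; apply: (subsetP HG). Qed.

Lemma X_closed g p : g \in G -> p \in X -> g p \in X.
Proof.
move=> hg /orbitP [h hh <-].
have -> : g ('P%act x0 h) = 'P%act x0 (h * g)%g by rewrite /= !apermE permM.
by rewrite mem_orbit // groupM.
Qed.

Lemma line_opp (u : 'rV[F]_n) : line (- u) = line u.
Proof.
apply/setP => x; apply/lineP/lineP => [[c ->]|[c ->]]; exists (- c);
  by rewrite scalerN scaleNr ?opprK.
Qed.

Lemma line_scale c (u : 'rV[F]_n) : c != 0 -> u != 0 -> line (c *: u) = line u.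
Proof.
move=> hc hu; apply/eqP; rewrite eq_sym; apply/line_eqP => //.
  by rewrite scaler_eq0 negb_or hc.
by exists c.
Qed.

Lemma isom_of_isOm M : isOm M -> forall v, Q (v *m M) = Q v.
Proof. by case. Qed.

Lemma unit_of_isOm M : isOm M -> M \in unitmx.
Proof. by case. Qed.

Lemma bf_isOm M : isOm M -> forall u w, bf (u *m M) (w *m M) = bf u w.
Proof. by move=> hM; apply: (isom_bf HA Hodd); apply: isom_of_isOm. Qed.

Definition inB (p : point) := [exists u, [&& u != 0, val p == line u & Q u == Q v0]].

Lemma inBP p : reflect (exists u, [/\ u != 0, val p = line u & Q u = Q v0]) (inB p).
Proof.
apply: (iffP existsP) => [[u /and3P [h1 /eqP h2 /eqP h3]]|[u [h1 h2 h3]]]; exists u => //.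
by rewrite h1 h2 h3 !eqxx.
Qed.

Lemma inB_X p : inB p -> p \in X.
Proof.
case/inBP => u [hu ep hQu].
have [M [hM vM]] := trans_om HA Hodd Hdet Hn hQ0 (esym hQu).
have -> : p = pm M x0.
  apply: val_inj; rewrite (pm_line (unit_of_isOm hM) hv0 ex0) ep.
  by case: vM => ->; rewrite ?line_opp.
by rewrite -apermE mem_orbit // isOm_G.
Qed.

Lemma not_mult (x y : point) v a : val x = line v -> val y = line a -> a != 0 -> v != 0 ->
  x != y -> forall c, a != c *: v.
Proof.
move=> ex ey ha hv hxy c; apply: contra hxy => /eqP e.
have hc : c != 0 by apply: contra ha => /eqP c0; rewrite e c0 scale0r.
by apply/eqP/val_inj; rewrite ex ey e line_scale.
Qed.

Lemma edge (x y p z : point) v a u d :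
  val x = line v -> val y = line a -> val p = line u -> val z = line d ->
  v != 0 -> a != 0 -> u != 0 -> d != 0 ->
  Q v = Q v0 -> Q a = Q v0 -> Q u = Q v0 -> Q d = Q v0 ->
  x != y -> p != z -> (bf u d = bf v a \/ bf u d = - bf v a) ->
  exists2 g, g \in G & g x = p /\ g y = z.
Proof.
move=> ex ey ep ez hv ha hu hd hQv hQa hQu hQd hxy hpz hb.
have hQv' : Q v != 0 by rewrite hQv.
have [M1 [hM1 vM1]] := trans_om HA Hodd Hdet Hn hQv' (etrans hQv (esym hQu)).
have hQu' : Q u != 0 by rewrite hQu.
pose a1 := a *m M1.
have hQa1 : Q a1 = Q u by rewrite /a1 isom_of_isOm // hQa hQu.
have hQd1 : Q a1 = Q d by rewrite hQa1 hQu hQd.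
have ba1 : bf u a1 = bf v a \/ bf u a1 = - bf v a.
  rewrite -(bf_isOm hM1 v a) -/a1.
  by case: vM1 => ->; [left | right; rewrite bfNl opprK].
have [d' [ed' hbd']] : exists d', (d' = d \/ d' = - d) /\ bf u a1 = bf u d'.
  case: ba1 => e1; case: hb => e2.
  - by exists d; split; [left | rewrite e1 e2].
  - by exists (- d); split; [right | rewrite bfNr e1 e2 opprK].
  - by exists (- d); split; [right | rewrite bfNr e1 e2].
  - by exists d; split; [left | rewrite e1 e2].
have hQd' : Q a1 = Q d' by case: ed' => ->; rewrite ?QN.
have na1 : forall c, a1 != c *: u.
  move=> c; apply/eqP => e.
  have hv1 : v *m M1 != 0 by apply: unit_row_neq0 => //; apply: unit_of_isOm.
  have [k hk ek] : exists2 k : F, k != 0 & u = k *: (v *m M1).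
    by case: vM1 => ->; [exists 1; rewrite ?oner_neq0 ?scale1r | exists (-1); rewrite ?oppr_eq0 ?oner_neq0 // scaleN1r opprK].
  have : a1 = (c * k) *: (v *m M1) by rewrite e ek scalerA.
  rewrite /a1 scalemxAl => /(row_free_inj (m:=1)); rewrite row_free_unit (unit_of_isOm hM1) => /(_ isT) ea.
  by move: (not_mult ex ey ha hv hxy (c * k)); rewrite ea eqxx.
have nd' : forall c, d' != c *: u.
  move=> c; have h := not_mult ep ez hd hu hpz.
  case: ed' => ->; first exact: h.
  apply/eqP => e; move/eqP: (h (- c)); apply; by rewrite scaleNr -e opprK.
have [M2 [hM2 uM2 aM2]] := witt_stab HA Hodd Hdet Hn hQu' hQd' hbd' na1 nd'.
exists (pm (M1 *m M2)); first by apply: isOm_G; apply: isOm_mul.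
have hu12 : M1 *m M2 \in unitmx by rewrite unitmx_mul !unit_of_isOm.
split; apply: val_inj.
- rewrite (pm_line hu12 hv ex) mulmxA ep.
  by case: vM1 => ->; rewrite ?mulNmx uM2 ?line_opp.
- rewrite (pm_line hu12 ha ey) mulmxA -/a1 aM2 ez.
  by case: ed' => ->; rewrite ?line_opp.
Qed.


Lemma PO_B M p : isOm M -> inB p -> inB (pm M p).
Proof.
move=> hM /inBP [u [hu ep hQu]]; apply/inBP; exists (u *m M); split.
- by apply: unit_row_neq0 => //; apply: unit_of_isOm.
- by rewrite (pm_line (unit_of_isOm hM) hu ep).
- by rewrite isom_of_isOm.
Qed.

Lemma x0_inB : inB x0.
Proof. by apply/inBP; exists v0. Qed.

Lemma moving_om : exists M, isOm M /\ pm M x0 != x0.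
Proof.
have [a [hav hQa]] := rep1 (Q v0) hQ0.
have ha : a != 0 by apply: contra hQ0 => /eqP a0; rewrite -hQa a0 (Q0 A).
have [M [hM vM]] := trans_om HA Hodd Hdet Hn hQ0 (esym hQa).
exists M; split => //; apply/eqP => e.
have : val (pm M x0) = line a.
  rewrite (pm_line (unit_of_isOm hM) hv0 ex0).
  by case: vM => ->; rewrite ?line_opp.
rewrite e ex0 => /eqP; case/line_eqP => // c hc ec.
by move: hav; rewrite ec bfZl -QE => /eqP; rewrite mulf_eq0 (negbTE hc) (negbTE hQ0).
Qed.

Hypothesis Hprim : [primitive G, on X | 'P].

Lemma X_inB p : p \in X -> inB p.
Proof.
have x0X : x0 \in X := orbit_refl _ _ _.
have trG : [transitive G, on X | 'P] by case/andP: Hprim.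
have := Hprim; rewrite (trans_prim_astab x0X trG) => /maximal_eqP [_ hmax].
pose B := [set q | inB q].
have memN : forall g, g \in G -> (forall q, inB q -> inB (g q)) -> g \in ('N_G(B | 'P))%g.
  move=> g gG hg.
  apply/setIP; split => //; rewrite /astabs; apply/setIP; split; first exact: in_setT.
  rewrite in_set; apply/subsetP => q; rewrite in_set => hq; rewrite !in_set /= apermE.
  exact: hg.
have hC : ('C_G[x0 | 'P] \subset 'N_G(B | 'P))%g.
  apply/subsetP => g /setIP [gG /astab1P gx]; apply: memN => // q.
  case/inBP => u [hu eq hQu].
  move: gx; rewrite /= apermE => gx.
  have [r [hr er hQr]] := semi_fix HA (Hsemi gG) hv0 hu ex0 gx eq hQu.
  by apply/inBP; exists r.
have hH : ('N_G(B | 'P) \subset G)%g by apply: subsetIl.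
case: (hmax ('N_G(B | 'P))%G hC hH) => hN.
  exfalso; have [M [hM hmv]] := moving_om.
  have : pm M \in ('N_G(B | 'P))%G.
    by apply: memN; [apply: isOm_G | move=> q; apply: PO_B].
  rewrite hN => /setIP [_ /astab1P]; rewrite /= apermE => h.
  by rewrite h eqxx in hmv.
move=> /orbitP [g gG <-].
have : g \in ('N_G(B | 'P))%G by rewrite hN.
case/setIP => _ hgB.
have := astabs_act x0 hgB; rewrite !in_set x0_inB.
by [].
Qed.


Lemma X_rep p : p \in X -> exists u, [/\ u != 0, val p = line u & Q u = Q v0].
Proof. by move/X_inB/inBP. Qed.

Lemma E_of (x y u w : point) g : g \in G -> g x = u -> g y = w -> orbital_rel G x y u w.
Proof. by move=> gG e1 e2; apply/existsP; exists g; rewrite gG e1 e2 !eqxx. Qed.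

Lemma E_of' (x y u w : point) g : g \in G -> g x = w -> g y = u -> orbital_rel G x y u w.
Proof. by move=> gG e1 e2; apply/existsP; exists g; rewrite gG e1 e2 !eqxx orbT. Qed.

Lemma diam_le2 x y : x \in X -> y \in X -> x != y -> graph_diam_le (orbital_rel G x y) X 2.
Proof.
move=> xX yX hxy u w uX wX.
case: (eqVneq u w) => [<-|huw]; first by exists [::].
have [v [hv ex hQv]] := X_rep xX.
have [a [ha ey hQa]] := X_rep yX.
have [u' [hu eu hQu]] := X_rep uX.
have [w' [hw ew hQw]] := X_rep wX.
pose be := bf v a.
pose de := bf u' w'.
have hQu0 : Q u' != 0 by rewrite hQu.
have [al1 [al2 [hb1 hb2]]] : exists al1 al2,
    bf u' (al1 *: u' + al2 *: w') = be /\
    (bf w' (al1 *: u' + al2 *: w') = be \/ bf w' (al1 *: u' + al2 *: w') = - be).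
  case: (eqVneq (Q v0 + de) 0) => hs.
    have hm : Q v0 - de != 0.
      have -> : de = - Q v0 by apply/eqP; rewrite -addr_eq0 addrC hs.
      by rewrite opprK -mulr2n -mulr_natl mulf_neq0 // two_unit.
    exists (be / (Q v0 - de)), (- (be / (Q v0 - de))); split.
      rewrite bfDr !bfZr -QE hQu -/de; field; exact: hm.
    right; rewrite bfDr !bfZr -QE hQw (bfC w' u') -/de; field; exact: hm.
  exists (be / (Q v0 + de)), (be / (Q v0 + de)); split.
    rewrite bfDr !bfZr -QE hQu -/de; field; exact: hs.
  left; rewrite bfDr !bfZr -QE hQw (bfC w' u') -/de; field; exact: hs.
pose d0 := al1 *: u' + al2 *: w'.
have [t [htu htw hQt]] := rep2 w' (Q v0 - Q d0) hQu0.
pose d := d0 + t.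
have hbd0t : bf d0 t = 0.
  by rewrite bfDl !bfZl (bfC u' t) htu (bfC w' t) htw !mulr0 addr0.
have hQd : Q d = Q v0 by rewrite QD hQt hbd0t mulr0 addr0 addrC subrK.
have hd1 : bf u' d = be by rewrite bfDr (bfC u' t) htu addr0.
have hd2 : bf w' d = be \/ bf w' d = - be by rewrite bfDr (bfC w' t) htw addr0.
have hd : d != 0 by apply: contra hQ0 => /eqP d0'; rewrite -hQd d0' (Q0 A).
clearbody d.
pose z := mkpt hd.
have ez : val z = line d by [].
have zX : z \in X by apply: inB_X; apply/inBP; exists d.
case: (eqVneq z u) => [zu|hzu].
  have hwz : w != z by rewrite zu eq_sym.
  have [g gG [g1 g2]] := edge ex ey ew ez hv ha hw hd hQv hQa hQw hQd hxy hwz hd2.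
  exists [:: w]; split => //=; first by rewrite wX.
  by rewrite andbT (E_of' gG g1) // g2.
case: (eqVneq z w) => [zw|hzw].
  have huz : u != z by rewrite zw.
  have [g gG [g1 g2]] := edge ex ey eu ez hv ha hu hd hQv hQa hQu hQd hxy huz (or_introl hd1).
  exists [:: w]; split => //=; first by rewrite wX.
  by rewrite andbT (E_of gG g1) // g2.
have huz : u != z by rewrite eq_sym.
have hwz : w != z by rewrite eq_sym.
have [g gG [g1 g2]] := edge ex ey eu ez hv ha hu hd hQv hQa hQu hQd hxy huz (or_introl hd1).
have [h hG [h1 h2]] := edge ex ey ew ez hv ha hw hd hQv hQa hQw hQd hxy hwz hd2.
exists [:: z; w]; split => //=; first by rewrite zX wX.
by rewrite (E_of gG g1 g2) (E_of' hG h1 h2).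
Qed.


Lemma not_diam1 : exists x y, [/\ x \in X, y \in X, x != y &
                    ~ graph_diam_le (orbital_rel G x y) X 1].
Proof.
have [a [hav hQa]] := rep1 (Q v0) hQ0.
have ha : a != 0 by apply: contra hQ0 => /eqP a0; rewrite -hQa a0 (Q0 A).
have [t [htv ht0 hQt]] := iso1 hQ0.
have hvt0 : bf v0 (v0 + t) = Q v0 by rewrite bfDr -QE bfC htv addr0.
have hw : v0 + t != 0.
  by apply: contra hQ0 => /eqP e; rewrite -hvt0 e bf0r.
have hQw : Q (v0 + t) = Q v0 by rewrite QD hQt bfC htv mulr0 !addr0.
pose y := mkpt ha; pose w := mkpt hw.
have ey : val y = line a by [].
have ew : val w = line (v0 + t) by [].
have yX : y \in X by apply: inB_X; apply/inBP; exists a.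
have wX : w \in X by apply: inB_X; apply/inBP; exists (v0 + t).
have x0X : x0 \in X := orbit_refl _ _ _.
have hxy : x0 != y.
  apply/eqP => e; have := congr1 val e; rewrite ex0 ey => /eqP.
  case/line_eqP => // c hc ec; move: hav; rewrite ec bfZl -QE => /eqP.
  by rewrite mulf_eq0 (negbTE hc) (negbTE hQ0).
exists x0, y; split => // hd.
have [s [hs1 hs2 hs3 hs4]] := hd x0 w x0X wX.
have hxw : x0 != w.
  apply/eqP => e; have := congr1 val e; rewrite ex0 ew => /eqP.
  case/line_eqP => // c hc ec.
  have et : t = (c - 1) *: v0 by rewrite scalerBl scale1r -ec addrC addKr.
  move: htv; rewrite et bfZl -QE => /eqP; rewrite mulf_eq0 (negbTE hQ0) orbF subr_eq0.
  by move=> /eqP c1; move: et; rewrite c1 subrr scale0r => /eqP; rewrite (negbTE ht0).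
case: s hs1 hs2 hs3 hs4 => [|z [|z' s]] //= _; first by move=> _ e; rewrite e eqxx in hxw.
rewrite andbT => /existsP [g /andP [gG /orP [/andP [/eqP e1 /eqP e2]|/andP [/eqP e1 /eqP e2]]]] ez _.
- have g1 : val (g x0) = line v0 by rewrite -e1.
  have g2 : val (g y) = line (v0 + t) by rewrite -e2 ez.
  have := semi_perp HA Hodd (Hsemi gG) ex0 ey g1 g2.
  rewrite bfC hav hvt0 => /(_ erefl) /eqP; by rewrite (negbTE hQ0).
- have g1 : val (g y) = line v0 by rewrite -e1.
  have g2 : val (g x0) = line (v0 + t) by rewrite -e2 ez.
  have := semi_perp HA Hodd (Hsemi gG) ey ex0 g1 g2.
  rewrite hav hvt0 => /(_ erefl) /eqP; by rewrite (negbTE hQ0).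
Qed.

End Main.


Theorem mainTheorem11 (F : finFieldType) (n : nat) (A : 'M[F]_n)
    (G : {group {perm point F n}}) (x0 : point F n) :
  odd #|F| -> (5 <= n)%N ->
  A^T = A -> \det A != 0 ->
  (POmega A \subset G)%g ->
  (forall g, g \in G -> induced_by_semisim A g) ->
  nondeg_point A x0 ->
  [primitive G, on orbit 'P G x0 | 'P] ->
  orbital_diam_eq G (orbit 'P G x0) 2%N.
Proof.
move=> Hodd Hn HA Hdet HG Hsemi /existsP [v0 /and3P [hv0 /eqP ex0 hQ0]] Hprim.
split.
  move=> x y xX yX hxy.
  exact: (diam_le2 HA Hodd Hdet Hn HG Hsemi hv0 ex0 hQ0 Hprim xX yX hxy).
exact: (not_diam1 HA Hodd Hdet Hn HG Hsemi hv0 ex0 hQ0).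
Qed.
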